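(* Let $q\in\,]0,1[$, $\omega\ge0$, let $I$ be an interval containing $\omega_0:=\omega/(1-q)$, $\alpha,\beta\in\mathbb{R}$, and suppose $a,b\in I$ with $a<b$ and $a,b\in[c]_{q,\omega}$ for some $c\in I$. Let $L:I\times\mathbb{R}\times\mathbb{R}\to\mathbb{R}$ satisfy: (H1) for every $t\in I$, $(u,v)\mapsto L(t,u,v)$ is $C^1(\mathbb{R}^2,\mathbb{R})$; (H2) for every admissible $y$, $t\mapsto L(t,y(\sigma(t)),\tilde D_{q,\omega}[y](t))$ is continuous at $\omega_0$; (H3) for every admissible $y$, $t\mapsto\partial_2L(t,y(\sigma(t)),\tilde D_{q,\omega}[y](t))$ and $t\mapsto\partial_3L(t,y(\sigma(t)),\tilde D_{q,\omega}[y](t))$ belong to $\mathcal{Y}^1([a,b]_{q,\omega},\mathbb{R})$. Assume $L$ is jointly convex (resp. jointly concave) in $(u,v)$. If an admissible function $y_*$ satisfies, for all $t\in[a,b]_{q,\omega}$, $$\partial_2L\bigl(t,y_*(\sigma(t)),\tilde D_{q,\omega}[y_*](t)\bigr)=\tilde D_{q,\omega}\Bigl[\tau\mapsto\partial_3L\bigl(\sigma(\tau),y_*(\sigma^2(\tau)),\tilde D_{q,\omega}[y_*](\sigma(\tau))\bigr)\Bigr](t),$$ then $y_*$ is a global minimizer (resp. maximizer) of problem (P), i.e. $\mathcal{L}(y_* )\le\mathcal{L}(y)$ (resp. $\ge$) for every admissible $y$.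
   Context: $\sigma(t):=qt+\omega$, $\sigma^{-1}(t):=q^{-1}(t-\omega)$, $\sigma^k$ the $k$-fold composition. Hahn symmetric derivative: for $t\neq\omega_0$, $\tilde D_{q,\omega}[f](t):=\frac{f(\sigma(t))-f(\sigma^{-1}(t))}{\sigma(t)-\sigma^{-1}(t)}$; $\tilde D_{q,\omega}[f](\omega_0):=f'(\omega_0)$ (classical). Hahn symmetric integral: $\int_{\omega_0}^xF\,\tilde d_{q,\omega}t:=(\sigma^{-1}(x)-\sigma(x))\sum_{n\ge0}q^{2n+1}F(\sigma^{2n+1}(x))$, $\int_a^bF\,\tilde d_{q,\omega}t:=\int_{\omega_0}^bF\,\tilde d_{q,\omega}t-\int_{\omega_0}^aF\,\tilde d_{q,\omega}t$. $[s]_{q,\omega}:=\{\sigma^{2n+1}(s):n\in\mathbb{N}_0\}\cup\{\omega_0\}$, $[a,b]_{q,\omega}:=[a]_{q,\omega}\cup[b]_{q,\omega}$. $\mathcal{Y}^1([a,b]_{q,\omega},\mathbb{R})$: functions $y:I\to\mathbb{R}$ with $y$ and $\tilde D_{q,\omega}[y]$ bounded on $[a,b]_{q,\omega}$ and continuous at $\omega_0$. Problem (P): extremize $\mathcal{L}(y):=\int_a^bL(t,y(\sigma(t)),\tilde D_{q,\omega}[y](t))\,\tilde d_{q,\omega}t$ over admissible $y$, i.e. $y\in\mathcal{Y}^1([a,b]_{q,\omega},\mathbb{R})$ with $y(a)=\alpha$, $y(b)=\beta$. $L$ is jointly convex (resp. concave) in $(u,v)$ if $\partial_2L,\partial_3L$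 exist, are continuous, and $L(t,u+u_1,v+v_1)-L(t,u,v)\ge$ (resp. $\le$) $\partial_2L(t,u,v)u_1+\partial_3L(t,u,v)v_1$ for all $(t,u,v),(t,u+u_1,v+v_1)\in I\times\mathbb{R}^2$. $\partial_jL$ is the partial derivative in the $j$-th argument. *)

(* Defs.v *)
From Stdlib Require Import Reals.
From Coquelicot Require Import Coquelicot.
Open Scope R_scope.

Definition hsigma (q w t : R) : R := q * t + w.
Definition hsigma_inv (q w t : R) : R := (t - w) / q.
Definition hsigma_iter (q w : R) (k : nat) (t : R) : R := Nat.iter k (hsigma q w) t.
Definition omega0 (q w : R) : R := w / (1 - q).

Definition hahn_D (q w : R) (f : R -> R) (t : R) : R :=
  if Req_EM_T t (omega0 q w) then Derive f t
  else (f (hsigma q w t) - f (hsigma_inv q w t)) / (hsigma q w t - hsigma_inv q w t).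

Definition hahn_int_from (q w : R) (F : R -> R) (x : R) : R :=
  (hsigma_inv q w x - hsigma q w x) *
  Series (fun n : nat => q ^ (2 * n + 1) * F (hsigma_iter q w (2 * n + 1) x)).
Definition hahn_int (q w a b : R) (F : R -> R) : R :=
  hahn_int_from q w F b - hahn_int_from q w F a.

Definition qw_set (q w s : R) (t : R) : Prop :=
  (exists n : nat, t = hsigma_iter q w (2 * n + 1) s) \/ t = omega0 q w.
Definition qw_set2 (q w a b : R) (t : R) : Prop := qw_set q w a t \/ qw_set q w b t.

Definition is_interval (I : R -> Prop) : Prop :=
  forall x y z, I x -> I z -> x <= y <= z -> I y.

Definition bounded_on (S : R -> Prop) (f : R -> R) : Prop :=
  exists M, forall t, S t -> Rabs (f t) <= M.

(* Y^1([a,b]_{q,w}, R): y and D[y] bounded on [a,b]_{q,w} and continuous at omega0.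
   (D[y](omega0) = y'(omega0) must exist for D[y] to be defined.) *)
Definition Y1 (q w a b : R) (y : R -> R) : Prop :=
  bounded_on (qw_set2 q w a b) y /\
  bounded_on (qw_set2 q w a b) (hahn_D q w y) /\
  ex_derive y (omega0 q w) /\
  continuous y (omega0 q w) /\
  continuous (hahn_D q w y) (omega0 q w).

Definition admissible (q w a b alpha beta : R) (y : R -> R) : Prop :=
  Y1 q w a b y /\ y a = alpha /\ y b = beta.

Definition d2L (L : R -> R -> R -> R) (t u v : R) : R := Derive (fun u' => L t u' v) u.
Definition d3L (L : R -> R -> R -> R) (t u v : R) : R := Derive (fun v' => L t u v') v.

Definition C1_in_uv (L : R -> R -> R -> R) (t : R) : Prop :=
  forall u v : R,
    ex_derive (fun u' => L t u' v) u /\ ex_derive (fun v' => L t u v') v /\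
    continuous (fun p : R * R => d2L L t (fst p) (snd p)) (u, v) /\
    continuous (fun p : R * R => d3L L t (fst p) (snd p)) (u, v).

Definition jointly_convex (I : R -> Prop) (L : R -> R -> R -> R) : Prop :=
  (forall t, I t -> C1_in_uv L t) /\
  forall t u v u1 v1, I t ->
    L t (u + u1) (v + v1) - L t u v >= d2L L t u v * u1 + d3L L t u v * v1.

Definition jointly_concave (I : R -> Prop) (L : R -> R -> R -> R) : Prop :=
  (forall t, I t -> C1_in_uv L t) /\
  forall t u v u1 v1, I t ->
    L t (u + u1) (v + v1) - L t u v <= d2L L t u v * u1 + d3L L t u v * v1.

Definition lag_comp (q w : R) (L : R -> R -> R -> R) (y : R -> R) (t : R) : R :=
  L t (y (hsigma q w t)) (hahn_D q w y t).
Definition functional (q w a b : R) (L : R -> R -> R -> R) (y : R -> R) : R :=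
  hahn_int q w a b (lag_comp q w L y).

(* Main.v *)
Require Import Defs.
From Stdlib Require Import Reals Lra Lia Arith.
From Coquelicot Require Import Coquelicot.
Open Scope R_scope.

Section Hahn.
Variables q w : R.
Hypothesis hq : 0 < q < 1.

Definition uS (F : R -> R) (x : R) (n : nat) : R :=
  q ^ (2 * n + 1) * F (hsigma_iter q w (2 * n + 1) x).

Lemma hif_eq F x : hahn_int_from q w F x = (hsigma_inv q w x - hsigma q w x) * Series (uS F x).
Proof. reflexivity. Qed.

Lemma sig_om t : hsigma q w t - omega0 q w = q * (t - omega0 q w).
Proof. unfold hsigma, omega0. field. lra. Qed.

Lemma iter_om k x : hsigma_iter q w k x - omega0 q w = q ^ k * (x - omega0 q w).
Proof.
  induction k; simpl. ring.
  change (hsigma q w (hsigma_iter q w k x) - omega0 q w = q * q ^ k * (x - omega0 q w)).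
  rewrite sig_om, IHk. ring.
Qed.

Lemma iter_eq k x : hsigma_iter q w k x = omega0 q w + q ^ k * (x - omega0 q w).
Proof. pose proof (iter_om k x). lra. Qed.

Lemma inv_sig t : hsigma_inv q w (hsigma q w t) = t.
Proof. unfold hsigma_inv, hsigma. field. lra. Qed.

Lemma fac x : hsigma_inv q w x - hsigma q w x = (x - omega0 q w) * (/ q - q).
Proof. unfold hsigma_inv, hsigma, omega0. field. lra. Qed.

Lemma pow_pos' k : 0 < q ^ k.
Proof. apply pow_lt; lra. Qed.

Lemma pow_le1' k : q ^ k <= 1.
Proof. induction k; simpl. lra. pose proof (pow_pos' k). nra. Qed.

Lemma lim_iter k x : is_lim_seq (fun n => hsigma_iter q w (2 * n + k) x) (omega0 q w).
Proof.
  apply is_lim_seq_ext with (fun n => omega0 q w + ((q ^ 2) ^ n) * (q ^ k * (x - omega0 q w))).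
  { intro n. rewrite iter_eq, pow_add, pow_mult. ring. }
  replace (Finite (omega0 q w)) with (Finite (omega0 q w + 0 * (q ^ k * (x - omega0 q w))))
    by (f_equal; ring).
  apply is_lim_seq_plus'. apply is_lim_seq_const.
  apply is_lim_seq_mult'. apply is_lim_seq_geom.
  rewrite Rabs_pos_eq. pose proof (pow_le1' 2). pose proof (pow_pos' 2). simpl in *; nra.
  pose proof (pow_pos' 2); lra.
  apply is_lim_seq_const.
Qed.

Lemma comp_lim (F : R -> R) x k : continuous F (omega0 q w) ->
  is_lim_seq (fun n => F (hsigma_iter q w (2 * n + k) x)) (F (omega0 q w)).
Proof.
  intros HF. unfold is_lim_seq. eapply filterlim_comp. apply lim_iter. exact HF.
Qed.

Lemma bnd u (l : R) : is_lim_seq u l -> exists M, forall n, Rabs (u n) <= M.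
Proof.
  intros H. apply is_lim_seq_Reals in H.
  assert (H1 : bound (EUn u)). { apply cauchy_bound, CV_Cauchy. exists l; exact H. }
  assert (H2 : bound (EUn (opp_seq u))). { apply cauchy_bound, CV_Cauchy. exists (- l).
    apply CV_opp. exact H. }
  destruct H1 as [M1 HM1]. destruct H2 as [M2 HM2].
  exists (Rmax M1 M2). intro n.
  assert (u n <= M1) by (apply HM1; exists n; reflexivity).
  assert (opp_seq u n <= M2) by (apply HM2; exists n; reflexivity).
  unfold opp_seq in *. unfold Rabs, Rmax. repeat destruct Rcase_abs; repeat destruct Rle_dec; lra.
Qed.

Lemma cvg (F : R -> R) x : continuous F (omega0 q w) -> ex_series (uS F x).
Proof.
  intros HF. destruct (bnd _ _ (comp_lim F x 1 HF)) as [M HM].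
  assert (HM0 : 0 <= M) by (specialize (HM O); pose proof (Rabs_pos (F (hsigma_iter q w (2 * 0 + 1) x))); lra).
  apply (@ex_series_le R_AbsRing R_CompleteNormedModule) with (fun n => M * q * (q ^ 2) ^ n).
  { intro n. change (norm (uS F x n)) with (Rabs (uS F x n)). unfold uS.
    rewrite Rabs_mult, Rabs_pos_eq by (apply Rlt_le, pow_pos').
    rewrite pow_add, pow_mult. specialize (HM n).
    pose proof (pow_pos' 2). pose proof (pow_lt (q^2) n ltac:(lra)). rewrite pow_1.
    assert (0 < q * (q^2)^n) by nra. nra. }
  exists (scal (M * q) (/ (1 - q ^ 2))).
  apply (@is_series_ext R_AbsRing R_NormedModule) with (fun n => scal (M * q) ((q ^ 2) ^ n)).
  { intro n. reflexivity. }
  apply (@is_series_scal_l R_AbsRing R_NormedModule). apply is_series_geom.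
  rewrite Rabs_pos_eq. pose proof (pow_le1' 2). pose proof (pow_pos' 2). simpl in *; nra.
  pose proof (pow_pos' 2); lra.
Qed.


Lemma hD_ne f t : t <> omega0 q w ->
  hahn_D q w f t = (f (hsigma q w t) - f (hsigma_inv q w t)) / (hsigma q w t - hsigma_inv q w t).
Proof. intros H. unfold hahn_D. destruct Req_EM_T; [contradiction | reflexivity]. Qed.

Definition Eterm (g y1 y2 : R -> R) (t : R) : R :=
  hahn_D q w (fun tau => g (hsigma q w tau)) t * (y1 (hsigma q w t) - y2 (hsigma q w t))
  + g t * (hahn_D q w y1 t - hahn_D q w y2 t).

Definition Pt (g y1 y2 : R -> R) x n :=
  g (hsigma_iter q w (2 * n + 1) x) *
  (y1 (hsigma_iter q w (2 * n) x) - y2 (hsigma_iter q w (2 * n) x)).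

Lemma term_eq g y1 y2 x n : x <> omega0 q w ->
  uS (Eterm g y1 y2) x n = (Pt g y1 y2 x n - Pt g y1 y2 x (S n)) / ((x - omega0 q w) * (/ q - q)).
Proof.
  intros hx. unfold uS, Eterm, Pt.
  set (A := hsigma_iter q w (2 * n) x).
  assert (e1 : hsigma_iter q w (2 * n + 1) x = hsigma q w A).
  { replace (2 * n + 1)%nat with (S (2 * n)) by lia. reflexivity. }
  assert (e2 : hsigma_iter q w (2 * S n + 1) x = hsigma q w (hsigma q w (hsigma q w A))).
  { replace (2 * S n + 1)%nat with (S (S (S (2 * n)))) by lia. reflexivity. }
  assert (e3 : hsigma_iter q w (2 * S n) x = hsigma q w (hsigma q w A)).
  { replace (2 * S n)%nat with (S (S (2 * n))) by lia. reflexivity. }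
  rewrite e1, e2, e3.
  assert (HA : A - omega0 q w = q ^ (2 * n) * (x - omega0 q w)) by apply iter_om.
  assert (Hpn : q ^ (2 * n) <> 0) by (apply Rgt_not_eq, pow_pos').
  assert (hxd : x - omega0 q w <> 0) by lra.
  assert (Hne : hsigma q w A <> omega0 q w).
  { intro E. pose proof (sig_om A). rewrite E, HA in H.
    assert (q * (q ^ (2 * n) * (x - omega0 q w)) <> 0).
    { apply Rmult_integral_contrapositive; split; [lra|].
      apply Rmult_integral_contrapositive; split; auto. }
    lra. }
  rewrite !(hD_ne _ _ Hne), inv_sig.
  assert (Hden : hsigma q w (hsigma q w A) - A = (q ^ 2 - 1) * (q ^ (2 * n) * (x - omega0 q w))).
  { replace (hsigma q w (hsigma q w A) - A) with
      ((hsigma q w (hsigma q w A) - omega0 q w) - (A - omega0 q w)) by ring.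
    rewrite sig_om, sig_om, HA. ring. }
  rewrite Hden, pow_add.
  field. repeat split; auto; try lra.
  intro E. assert (q * q = 1) by nra. nra.
  intro E. assert (q * q = 1) by (field_simplify in E; nra). nra.
Qed.

Lemma tele (g y1 y2 : R -> R) x : x <> omega0 q w ->
  continuous g (omega0 q w) -> continuous y1 (omega0 q w) -> continuous y2 (omega0 q w) ->
  is_series (uS (Eterm g y1 y2) x)
    ((Pt g y1 y2 x 0 - g (omega0 q w) * (y1 (omega0 q w) - y2 (omega0 q w)))
       / ((x - omega0 q w) * (/ q - q))).
Proof.
  intros hx Hg H1 H2.
  set (K := (x - omega0 q w) * (/ q - q)).
  assert (Hs : forall n, @eq R (sum_n (uS (Eterm g y1 y2) x) n) ((Pt g y1 y2 x 0 - Pt g y1 y2 x (S n)) / K)).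
  { induction n.
    - rewrite sum_O. apply term_eq; auto.
    - rewrite sum_Sn, IHn, term_eq by auto. unfold K.
      change (plus ?a ?b) with (a + b). field.
      repeat split; try lra. intro E. nra. }
  unfold is_series.
  change (is_lim_seq (sum_n (uS (Eterm g y1 y2) x))
    (Finite ((Pt g y1 y2 x 0 - g (omega0 q w) * (y1 (omega0 q w) - y2 (omega0 q w))) / K))).
  apply is_lim_seq_ext with (fun n => (Pt g y1 y2 x 0 - Pt g y1 y2 x (S n)) / K).
  { intros n. symmetry. apply Hs. }
  unfold Rdiv. apply is_lim_seq_mult'; [|apply is_lim_seq_const].
  apply is_lim_seq_minus'; [apply is_lim_seq_const|].
  apply (proj1 (is_lim_seq_incr_1 (Pt g y1 y2 x) _)).
  unfold Pt. apply is_lim_seq_mult'. apply (comp_lim g x 1 Hg).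
  assert (Hz : forall (f : R -> R), continuous f (omega0 q w) ->
     is_lim_seq (fun n => f (hsigma_iter q w (2 * n) x)) (f (omega0 q w))).
  { intros f Hf. apply is_lim_seq_ext with (fun n => f (hsigma_iter q w (2 * n + 0) x)).
    intro n. rewrite Nat.add_0_r. reflexivity. apply comp_lim; auto. }
  apply is_lim_seq_minus'; apply Hz; auto.
Qed.


Lemma hif_om F : hahn_int_from q w F (omega0 q w) = 0.
Proof. rewrite hif_eq, fac. ring. Qed.

Lemma sig_om0 : hsigma q w (omega0 q w) = omega0 q w.
Proof. pose proof (sig_om (omega0 q w)). lra. Qed.

Lemma hifE (g y1 y2 : R -> R) x :
  continuous g (omega0 q w) -> continuous y1 (omega0 q w) -> continuous y2 (omega0 q w) ->
  hahn_int_from q w (Eterm g y1 y2) x =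
  g (hsigma q w x) * (y1 x - y2 x) - g (omega0 q w) * (y1 (omega0 q w) - y2 (omega0 q w)).
Proof.
  intros Hg H1 H2. destruct (Req_EM_T x (omega0 q w)) as [e|hx].
  - subst x. rewrite hif_om, sig_om0. ring.
  - rewrite hif_eq, (is_series_unique _ _ (tele g y1 y2 x hx Hg H1 H2)), fac. unfold Pt.
    replace (hsigma_iter q w (2 * 0 + 1) x) with (hsigma q w x) by reflexivity.
    replace (hsigma_iter q w (2 * 0) x) with x by reflexivity.
    field. repeat split; try lra; intro E; nra.
Qed.

Lemma ex_om (F : R -> R) : ex_series (uS F (omega0 q w)).
Proof.
  apply (@ex_series_ext R_AbsRing R_NormedModule) with (uS (fun _ => F (omega0 q w)) (omega0 q w)).
  { intro n. unfold uS. rewrite iter_eq. replace (omega0 q w + q ^ (2 * n + 1) * (omega0 q w - omega0 q w))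
      with (omega0 q w) by ring. reflexivity. }
  apply cvg. apply continuous_const.
Qed.

Lemma exE (g y1 y2 : R -> R) x :
  continuous g (omega0 q w) -> continuous y1 (omega0 q w) -> continuous y2 (omega0 q w) ->
  ex_series (uS (Eterm g y1 y2) x).
Proof.
  intros Hg H1 H2. destruct (Req_EM_T x (omega0 q w)) as [e|hx].
  - subst x. apply ex_om.
  - eexists. apply tele; auto.
Qed.

Lemma ex_lin (F1 F2 F3 : R -> R) k x :
  ex_series (uS F1 x) -> ex_series (uS F2 x) -> ex_series (uS F3 x) ->
  ex_series (fun n => uS F1 x n - uS F2 x n) /\
  ex_series (fun n => k * uS F3 x n) /\
  ex_series (uS (fun t => F1 t - F2 t + k * F3 t) x).
Proof.
  intros e1 e2 e3.
  assert (a1 : ex_series (fun n => uS F1 x n - uS F2 x n)).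
  { apply (@ex_series_ext R_AbsRing R_NormedModule) with (fun n => plus (uS F1 x n) (opp (uS F2 x n))).
    intro n. reflexivity. apply (@ex_series_minus R_AbsRing R_NormedModule); auto. }
  assert (a2 : ex_series (fun n => k * uS F3 x n)).
  { apply (@ex_series_ext R_AbsRing R_NormedModule) with (fun n => scal k (uS F3 x n)).
    intro n. reflexivity. apply (@ex_series_scal_l R_AbsRing R_NormedModule); auto. }
  split; [auto|split; [auto|]].
  apply (@ex_series_ext R_AbsRing R_NormedModule) with
    (fun n => plus (uS F1 x n - uS F2 x n) (k * uS F3 x n)).
  { intro n. change (@eq R (plus (uS F1 x n - uS F2 x n) (k * uS F3 x n))
      (uS (fun t => F1 t - F2 t + k * F3 t) x n)).
    unfold uS. change (plus ?a ?b) with (a + b). ring. }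
  apply (@ex_series_plus R_AbsRing R_NormedModule); auto.
Qed.

Lemma hif_lin (F1 F2 F3 : R -> R) k x :
  ex_series (uS F1 x) -> ex_series (uS F2 x) -> ex_series (uS F3 x) ->
  hahn_int_from q w (fun t => F1 t - F2 t + k * F3 t) x =
  hahn_int_from q w F1 x - hahn_int_from q w F2 x + k * hahn_int_from q w F3 x.
Proof.
  intros e1 e2 e3. destruct (ex_lin F1 F2 F3 k x e1 e2 e3) as [a1 [a2 _]].
  rewrite !hif_eq.
  rewrite (Series_ext _ (fun n => (uS F1 x n - uS F2 x n) + k * uS F3 x n))
    by (intros; unfold uS; ring).
  rewrite Series_plus, Series_minus, Series_scal_l; auto. ring.
Qed.

Lemma step G x : ex_series (uS G x) ->
  hahn_int_from q w G x =
  (x - omega0 q w) * (/ q - q) * q * G (hsigma q w x) + hahn_int_from q w G (hsigma q w (hsigma q w x)).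
Proof.
  intros e. rewrite !hif_eq, !fac, Series_incr_1 by auto.
  rewrite (Series_ext _ (fun k => q ^ 2 * uS G (hsigma q w (hsigma q w x)) k)).
  2:{ intro k. unfold uS.
      replace (2 * S k + 1)%nat with ((2 * k + 1) + 2)%nat by lia.
      rewrite pow_add, Nat.mul_comm. unfold hsigma_iter. rewrite Nat.iter_add. simpl. ring. }
  rewrite Series_scal_l.
  replace (uS G x 0) with (q * G (hsigma q w x)) by (unfold uS; simpl; ring).
  rewrite (sig_om (hsigma q w x)), sig_om. ring.
Qed.

Lemma invq_pos : / q - q > 0.
Proof.
  assert (/ q > 0) by (apply Rinv_0_lt_compat; lra).
  assert (q * / q = 1) by (field; lra). nra.
Qed.

Lemma mono G x : (forall y, ex_series (uS G y)) ->
  (forall n, 0 <= G (hsigma_iter q w (2 * n + 1) x)) -> forall j,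
  (omega0 q w <= x -> hahn_int_from q w G (hsigma_iter q w (2 * j) x) <= hahn_int_from q w G x) /\
  (x <= omega0 q w -> hahn_int_from q w G x <= hahn_int_from q w G (hsigma_iter q w (2 * j) x)).
Proof.
  intros Hex Hpos j. induction j as [|j [IH1 IH2]].
  - simpl. split; intros; lra.
  - set (y := hsigma_iter q w (2 * j) x) in *.
    assert (ey : hsigma_iter q w (2 * S j) x = hsigma q w (hsigma q w y)).
    { replace (2 * S j)%nat with (S (S (2 * j))) by lia. reflexivity. }
    assert (ey1 : hsigma q w y = hsigma_iter q w (2 * j + 1) x).
    { replace (2 * j + 1)%nat with (S (2 * j)) by lia. reflexivity. }
    rewrite ey. pose proof (step G y (Hex y)) as Hs.
    assert (Hc : 0 <= (/ q - q) * q * G (hsigma q w y)).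
    { rewrite ey1. pose proof (Hpos j). pose proof invq_pos. apply Rmult_le_pos; [|auto]. nra. }
    assert (Hy : y - omega0 q w = q ^ (2 * j) * (x - omega0 q w)) by apply iter_om.
    pose proof (pow_pos' (2 * j)).
    set (c := (/ q - q) * q * G (hsigma q w y)) in *.
    replace ((y - omega0 q w) * (/ q - q) * q * G (hsigma q w y)) with
      (q ^ (2 * j) * (x - omega0 q w) * c) in Hs by (rewrite Hy; unfold c; ring).
    split; intro hx.
    + assert (0 <= q ^ (2 * j) * (x - omega0 q w) * c).
      { apply Rmult_le_pos; auto. apply Rmult_le_pos; lra. }
      specialize (IH1 hx). lra.
    + assert (0 <= q ^ (2 * j) * (omega0 q w - x) * c).
      { apply Rmult_le_pos; auto. apply Rmult_le_pos; lra. }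
      specialize (IH2 hx). lra.
Qed.

Lemma series0 : Series (fun _ : nat => 0) = 0.
Proof.
  transitivity (Series (fun _ : nat => 0 * 0)). apply Series_ext; intros; ring.
  rewrite (Series_scal_l 0 (fun _ => 0)). ring.
Qed.

Lemma sgn G x : ex_series (uS G x) ->
  (forall n, 0 <= G (hsigma_iter q w (2 * n + 1) x)) ->
  (omega0 q w <= x -> 0 <= hahn_int_from q w G x) /\
  (x <= omega0 q w -> hahn_int_from q w G x <= 0).
Proof.
  intros e Hp. rewrite hif_eq, fac.
  assert (0 <= Series (uS G x)).
  { rewrite <- series0. apply Series_le; auto. intro n. split. lra.
    unfold uS. apply Rmult_le_pos; auto. apply Rlt_le, pow_pos'. }
  pose proof invq_pos.
  split; intro hx.
  - apply Rmult_le_pos; auto. apply Rmult_le_pos; lra.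
  - assert (0 <= (omega0 q w - x) * (/ q - q) * Series (uS G x)).
    { apply Rmult_le_pos; auto. apply Rmult_le_pos; lra. }
    lra.
Qed.

Lemma final G a b c : a < b -> qw_set q w c a -> qw_set q w c b ->
  (forall y, ex_series (uS G y)) -> (forall t, qw_set2 q w a b t -> 0 <= G t) ->
  hahn_int_from q w G a <= hahn_int_from q w G b.
Proof.
  intros hab hac hbc Hex Hp.
  assert (Pa : forall n, 0 <= G (hsigma_iter q w (2 * n + 1) a)).
  { intro n. apply Hp. left. left. exists n. reflexivity. }
  assert (Pb : forall n, 0 <= G (hsigma_iter q w (2 * n + 1) b)).
  { intro n. apply Hp. right. left. exists n. reflexivity. }
  destruct (sgn G a (Hex a) Pa) as [Sa1 Sa2].
  destruct (sgn G b (Hex b) Pb) as [Sb1 Sb2].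
  destruct hac as [[m Hm]|Ha]; destruct hbc as [[k Hk]|Hb].
  - destruct (le_lt_dec k m) as [hkm|hkm].
    + assert (ea : a = hsigma_iter q w (2 * (m - k)) b).
      { rewrite Hm, Hk. unfold hsigma_iter. rewrite <- Nat.iter_add. f_equal. lia. }
      destruct (Rle_dec (omega0 q w) b) as [hb|hb].
      * rewrite ea. apply (proj1 (mono G b Hex Pb (m - k))); auto.
      * exfalso. pose proof (iter_om (2 * (m - k)) b). rewrite <- ea in H.
        pose proof (pow_le1' (2 * (m - k))). pose proof (pow_pos' (2 * (m - k))). nra.
    + assert (eb : b = hsigma_iter q w (2 * (k - m)) a).
      { rewrite Hm, Hk. unfold hsigma_iter. rewrite <- Nat.iter_add. f_equal. lia. }
      destruct (Rle_dec a (omega0 q w)) as [ha|ha].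
      * rewrite eb. apply (proj2 (mono G a Hex Pa (k - m))); auto.
      * exfalso. pose proof (iter_om (2 * (k - m)) a). rewrite <- eb in H.
        pose proof (pow_le1' (2 * (k - m))). pose proof (pow_pos' (2 * (k - m))). nra.
  - rewrite Hb, hif_om. apply Sa2. lra.
  - rewrite Ha, hif_om. apply Sb1. lra.
  - lra.
Qed.

Lemma orbitI (I : R -> Prop) x k : is_interval I -> I (omega0 q w) -> I x ->
  I (hsigma_iter q w k x).
Proof.
  intros hI h0 hx. rewrite iter_eq. pose proof (pow_le1' k). pose proof (pow_pos' k).
  destruct (Rle_dec x (omega0 q w)).
  - apply (hI x _ (omega0 q w)); auto. split; nra.
  - apply (hI (omega0 q w) _ x); auto. split; nra.
Qed.

End Hahn.

Theorem theorem3p11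
  (q w : R) (I : R -> Prop) (alpha beta a b c : R) (L : R -> R -> R -> R)
  (hq : 0 < q < 1) (hw : 0 <= w)
  (hI : is_interval I) (hI0 : I (omega0 q w))
  (ha : I a) (hb : I b) (hab : a < b) (hc : I c)
  (hac : qw_set q w c a) (hbc : qw_set q w c b)
  (H1 : forall t, I t -> C1_in_uv L t)
  (H2 : forall y, admissible q w a b alpha beta y ->
          continuous (lag_comp q w L y) (omega0 q w))
  (H3 : forall y, admissible q w a b alpha beta y ->
          Y1 q w a b (fun t => d2L L t (y (hsigma q w t)) (hahn_D q w y t)) /\
          Y1 q w a b (fun t => d3L L t (y (hsigma q w t)) (hahn_D q w y t)))
  (ystar : R -> R) (hys : admissible q w a b alpha beta ystar)
  (EL : forall t, qw_set2 q w a b t ->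
          d2L L t (ystar (hsigma q w t)) (hahn_D q w ystar t) =
          hahn_D q w (fun tau => d3L L (hsigma q w tau)
                                   (ystar (hsigma q w (hsigma q w tau)))
                                   (hahn_D q w ystar (hsigma q w tau))) t) :
  (jointly_convex I L ->
     forall y, admissible q w a b alpha beta y ->
       functional q w a b L ystar <= functional q w a b L y) /\
  (jointly_concave I L ->
     forall y, admissible q w a b alpha beta y ->
       functional q w a b L ystar >= functional q w a b L y).
Proof.
  set (g := fun t => d3L L t (ystar (hsigma q w t)) (hahn_D q w ystar t)).
  assert (Hg : continuous g (omega0 q w)).
  { destruct (H3 ystar hys) as [_ [_ [_ [_ [Hc _]]]]]. exact Hc. }
  assert (Hys : continuous ystar (omega0 q w)).
  { destruct hys as [[_ [_ [_ [Hc _]]]] _]. exact Hc. }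
  assert (HIt : forall t, qw_set2 q w a b t -> I t).
  { intros t [[[n Hn]|Hn]|[[n Hn]|Hn]]; subst t; auto; apply orbitI; auto. }
  assert (Hd : forall t, qw_set2 q w a b t ->
     hahn_D q w (fun tau => g (hsigma q w tau)) t = d2L L t (ystar (hsigma q w t)) (hahn_D q w ystar t)).
  { intros t Ht. rewrite (EL t Ht). reflexivity. }
  assert (Hcore : forall y, admissible q w a b alpha beta y -> forall (F1 F2 : R -> R) k,
     (F1 = lag_comp q w L y /\ F2 = lag_comp q w L ystar) \/
     (F1 = lag_comp q w L ystar /\ F2 = lag_comp q w L y) ->
     (forall t, qw_set2 q w a b t -> 0 <= F1 t - F2 t + k * Eterm q w g y ystar t) ->
     hahn_int q w a b F2 <= hahn_int q w a b F1).
  { intros y hy F1 F2 k HF Hpos.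
    assert (Hy : continuous y (omega0 q w)).
    { destruct hy as [[_ [_ [_ [Hc _]]]] _]. exact Hc. }
    assert (e1 : forall x, ex_series (uS q w F1 x)).
    { intro x. destruct HF as [[-> ->]|[-> ->]]; apply cvg; auto. }
    assert (e2 : forall x, ex_series (uS q w F2 x)).
    { intro x. destruct HF as [[-> ->]|[-> ->]]; apply cvg; auto. }
    assert (e3 : forall x, ex_series (uS q w (Eterm q w g y ystar) x)).
    { intro x. apply exE; auto. }
    set (G := fun t => F1 t - F2 t + k * Eterm q w g y ystar t).
    assert (Hfin : hahn_int_from q w G a <= hahn_int_from q w G b).
    { apply (final q w hq G a b c); auto.
      intro x. destruct (ex_lin q w F1 F2 (Eterm q w g y ystar) k x) as [_ [_ e]]; auto. }
    unfold G in Hfin. rewrite !hif_lin in Hfin by auto.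
    rewrite !hifE in Hfin by auto.
    destruct hy as [_ [hya hyb]]. destruct hys as [_ [hsa hsb]].
    rewrite hya, hyb, hsa, hsb in Hfin.
    unfold hahn_int. lra. }
  split.
  - intros [_ Hcv] y hy. unfold functional.
    apply (Hcore y hy (lag_comp q w L y) (lag_comp q w L ystar) (-1)); [left; auto|].
    intros t Ht. unfold Eterm. rewrite (Hd t Ht). unfold lag_comp, g.
    pose proof (Hcv t (ystar (hsigma q w t)) (hahn_D q w ystar t)
       (y (hsigma q w t) - ystar (hsigma q w t)) (hahn_D q w y t - hahn_D q w ystar t) (HIt t Ht)) as Hc.
    replace (ystar (hsigma q w t) + (y (hsigma q w t) - ystar (hsigma q w t))) with (y (hsigma q w t)) in Hc by ring.
    replace (hahn_D q w ystar t + (hahn_D q w y t - hahn_D q w ystar t)) with (hahn_D q w y t) in Hc by ring.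
    lra.
  - intros [_ Hcv] y hy. unfold functional. apply Rle_ge.
    apply (Hcore y hy (lag_comp q w L ystar) (lag_comp q w L y) 1); [right; auto|].
    intros t Ht. unfold Eterm. rewrite (Hd t Ht). unfold lag_comp, g.
    pose proof (Hcv t (ystar (hsigma q w t)) (hahn_D q w ystar t)
       (y (hsigma q w t) - ystar (hsigma q w t)) (hahn_D q w y t - hahn_D q w ystar t) (HIt t Ht)) as Hc.
    replace (ystar (hsigma q w t) + (y (hsigma q w t) - ystar (hsigma q w t))) with (y (hsigma q w t)) in Hc by ring.
    replace (hahn_D q w ystar t + (hahn_D q w y t - hahn_D q w ystar t)) with (hahn_D q w y t) in Hc by ring.
    lra.
Qed.
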